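(* Let $r \geq 2$, let $H$ be a digraph (possibly with loops), and let $D$ be an $H$-colored $r$-transitive digraph. For every $l \geq r-1$ and every $k \geq 2$, $D$ has a $(k,l,H)$-kernel.
   Context: All digraphs are finite. A digraph $D$ is $r$-transitive if for all distinct $u,v\in V(D)$, whenever there is a directed $uv$-path of length $r$, the arc $(u,v)$ belongs to $A(D)$. $D$ has no loops and comes with a map $\rho: A(D)\to V(H)$. For a walk $W=(x_0,\ldots,x_n)$ in $D$, there is an obstruction on $x_i$ if $(\rho(x_{i-1},x_i),\rho(x_i,x_{i+1})) \notin A(H)$; for an open walk this is considered at internal vertices $x_i$, $1\le i\le n-1$, for a closed walk at all $i\in\{0,\ldots,n-1\}$ with indices modulo $n$. $O_H(W)$ is the set of indices with an obstruction; the $H$-length is $l_H(W)=|O_H(W)|+1$ for open $W$ and $|O_H(W)|$ for closed $W$. For $k\ge 2$ and $l\ge 1$, a $(k,l,H)$-kernel is a set $S\subseteq V(D)$ such that for every two distinct $u,v\in S$ every directed $uv$-path in $D$ has $H$-length at least $k$, and for every $x\in V(D)\setminus S$ there is a directed path from $x$ to a vertex of $S$ of $H$-length at most $l$. *)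

(* Defs.v *)
From mathcomp Require Import all_boot.
Set Implicit Arguments. Unset Strict Implicit. Unset Printing Implicit Defensive.

Section Defs.
Variables (V W : finType) (e : rel V) (hA : rel W) (rho : V -> V -> W).

(* A directed path is a nonempty sequence of pairwise distinct vertices,
   consecutive ones joined by arcs of e. [is_dpath u v s]: s = (x_0,...,x_n)
   is a directed path from u = x_0 to v = x_n; its length is n = size s - 1. *)
Definition is_dpath (u v : V) (s : seq V) : Prop :=
  exists p, s = u :: p /\ path e u p /\ uniq (u :: p) /\ last u p = v.

Definition r_transitive (r : nat) : Prop :=
  forall u v (s : seq V), u != v -> is_dpath u v s -> size s = r.+1 -> e u v.

(* Obstruction at internal index i of the open walk s (default element x0 unused in range). *)
Definition obstruction (x0 : V) (s : seq V) (i : nat) : bool :=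
  ~~ hA (rho (nth x0 s i.-1) (nth x0 s i)) (rho (nth x0 s i) (nth x0 s i.+1)).

Definition H_length (s : seq V) : nat :=
  match s with
  | [::] => 1
  | x0 :: _ => count (obstruction x0 s) (iota 1 (size s - 2)) + 1
  end.

Definition is_klH_kernel (k l : nat) (S : {set V}) : Prop :=
  (forall u v, u \in S -> v \in S -> u != v ->
     forall s, is_dpath u v s -> k <= H_length s)
  /\ (forall x, x \notin S ->
        exists v s, v \in S /\ is_dpath x v s /\ H_length s <= l).
End Defs.

(* Main.v *)
Require Import Defs.
From mathcomp Require Import all_boot zify.

Section Aux.
Variables (V : finType) (e : rel V) (r : nat).
Hypothesis hr : 2 <= r.
Hypothesis htrans : r_transitive e r.

Lemma shortcut x p1 w p2 :
  path e x (p1 ++ w :: p2) -> uniq (x :: p1 ++ w :: p2) -> size p1 = r.-1 -> e x w.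
Proof.
move=> hp hu hs.
have xw : x != w.
  apply/eqP => exw; move: hu; rewrite /= -exw mem_cat in_cons eqxx orbT.
  by [].
apply: (@htrans x w (x :: rcons p1 w) xw).
  exists (rcons p1 w); split => //; split.
    rewrite rcons_path; move: hp; rewrite cat_path /= => /andP[-> /andP[-> _]] //.
  split; last by rewrite last_rcons.
  by move: hu; rewrite -cat_rcons -cat_cons cat_uniq => /andP[].
by rewrite /= size_rcons hs; case: r hr.
Qed.

Lemma short_path n : forall x v p, size p = n -> path e x p -> uniq (x :: p) ->
  last x p = v -> exists q, [/\ path e x q, uniq (x :: q), last x q = v & size q <= r.-1].
Proof.
elim: n {-2}n (leqnn n) => [|n IH] m hm x v p hs hp hu hl.
  exists p; split => //; by rewrite hs; move: hm; rewrite leqn0 => /eqP ->.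
case: (leqP (size p) r.-1) => hsp; first by exists p.
have hd : size (drop r.-1 p) > 0 by rewrite size_drop subn_gt0.
case hdr: (drop r.-1 p) hd => [|w p2] // _.
have hpd : p = take r.-1 p ++ w :: p2 by rewrite -hdr cat_take_drop.
have exw : e x w.
  apply: (@shortcut x (take r.-1 p) w p2); rewrite -?hpd //.
  by rewrite size_take hsp.
apply: (IH (size (w :: p2)) _ x v (w :: p2)) => //.
- rewrite -hdr size_drop -ltnS; apply: leq_trans hm; rewrite -hs.
  lia.
- move: hp; rewrite hpd cat_path /= exw => /andP[_ /andP[_ ->]] //.
- rewrite -hdr /= drop_uniq; last by case/andP: hu.
  case/andP: hu => hx _; rewrite andbT; apply: contra hx; exact: mem_drop.
- by rewrite -hl [in RHS]hpd last_cat.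
Qed.

End Aux.

Theorem theorem11 (V W : finType) (e : rel V) (hA : rel W) (rho : V -> V -> W)
  (r : nat) (hr : 2 <= r) (e_irr : irreflexive e)
  (htrans : r_transitive e r) :
  forall l k : nat, r.-1 <= l -> 2 <= k ->
  exists S : {set V}, is_klH_kernel e hA rho k l S.
Proof.
move=> l k hl hk.
pose S := [set s | [forall y, connect e s y ==> connect e y s && (enum_rank s <= enum_rank y)]].
exists S; split.
  move=> u v; rewrite !inE => /forallP hu /forallP hv huv s [p [_ [hp [_ hlast]]]].
  have cuv : connect e u v by apply/connectP; exists p.
  move: (hu v); rewrite cuv /= => /andP[cvu r1].
  move: (hv u); rewrite cvu /= => /andP[_ r2].
  have : enum_rank u = enum_rank v by apply: val_inj; apply/eqP; rewrite eqn_leq r1 r2.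
  by move/enum_rank_inj => euv; rewrite euv eqxx in huv.
move=> x hx.
case: (@arg_minnP _ x (connect e x) (fun y => #|[set z | connect e y z]|) (connect0 e x)) => y cxy ymin.
case: (@arg_minnP _ y (connect e y) (fun z => nat_of_ord (enum_rank z)) (connect0 e y)) => s cys smin.
have sS : s \in S.
  rewrite inE; apply/forallP => w; apply/implyP => csw.
  have cyw : connect e y w := connect_trans cys csw.
  have sub : [set z | connect e w z] \subset [set z | connect e y z].
    by apply/subsetP => z; rewrite !inE; apply: connect_trans.
  have sub2 : [set z | connect e y z] \subset [set z | connect e w z].
    by rewrite -(subset_leqif_card sub).2 eqn_leq (subset_leqif_card sub).1 ymin // (connect_trans cxy cyw).
  have : y \in [set z | connect e w z] by apply: (subsetP sub2); rewrite inE connect0.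
  rewrite inE => cwy.
  by rewrite (connect_trans cwy cys) /= smin.
have cxs : connect e x s := connect_trans cxy cys.
have xs : x != s by apply: contraNneq hx => ->.
case/connectP: cxs => p hp hlast.
move: hlast; case: (shortenP hp) => p' hp' hu' _ hlast.
have [q [hq1 hq2 hq3 hq4]] := @short_path V e r hr htrans _ x s p' (erefl _) hp' hu' (esym hlast).
exists s, (x :: q); split; first by [].
split; first by exists q.
rewrite /H_length.
have := count_size (obstruction hA rho x (x :: q)) (iota 1 (size (x :: q) - 2)).
rewrite size_iota /=.
case: q hq1 hq2 hq3 hq4 => [|a q] /= _ _ hq3 hq4.
  by move: xs; rewrite -hq3 eqxx.
lia.
Qed.
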